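(* (i) If $\alpha\le\frac12$, then $\theta(y;\alpha,\lambda)=1$ for all $y\ge0$ and all $\lambda>0$. (ii) If $\alpha>\frac12$, then $\theta(y;\alpha,\lambda)<1$ for all $y\ge0$ and all $\lambda>0$.
   Context: For a countable set $P\subseteq\mathbb R\times[0,\infty)$, $\Gamma(P)$ denotes the graph on vertex set $P$ in which distinct points $(x,y),(x',y')$ are adjacent iff $|x-x'|<e^{\frac12(y+y')}$. For $\alpha,\lambda>0$, $\mathcal P_{\alpha,\lambda}$ is a Poisson point process on $\mathbb R\times[0,\infty)$ with intensity function $\lambda e^{-\alpha y}$. For $y\ge 0$, $\theta(y;\alpha,\lambda)$ is the probability that $\Gamma(\{(0,y)\}\cup\mathcal P_{\alpha,\lambda})$ contains an infinite connected component containing $(0,y)$. *)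

(* Defs.v *)
From HB Require Import structures.
From mathcomp Require Import all_boot all_order all_algebra.
From mathcomp Require Import all_classical all_reals all_analysis.
Set Implicit Arguments. Unset Strict Implicit. Unset Printing Implicit Defensive.
Import Order.TTheory GRing.Theory Num.Theory.
Import numFieldNormedType.Exports.
Local Open Scope classical_set_scope.
Local Open Scope ring_scope.

Section Defs.
Variable R : realType.

Definition halfplane : set (R * R) := [set p | 0 <= p.2].

Definition hadj (p q : R * R) : Prop :=
  p <> q /\ `|p.1 - q.1| < expR ((p.2 + q.2) / 2).

Definition reachable (V : set (R * R)) (p q : R * R) : Prop :=
  exists s : seq (R * R),
    [/\ p \in V, (forall z, z \in s -> z \in V),
        path (fun a b => `[< hadj a b >]) p s & last p s = q].

Definition component (V : set (R * R)) (p : R * R) : set (R * R) :=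
  [set q | reachable V p q].

Definition percolates (y : R) (P : set (R * R)) : Prop :=
  infinite_set (component ([set (0, y)] `|` P) (0, y)).

Definition intensity (alpha lambda : R) (B : set (R * R)) : \bar R :=
  (\int[(@lebesgue_measure R \x @lebesgue_measure R)%E]_(p in B)
      (lambda * expR (- (alpha * p.2)))%:E)%E.

Definition bounded_set2 (B : set (R * R)) : Prop :=
  exists r : R, forall p, B p -> `|p.1| <= r /\ `|p.2| <= r.

Definition count_eq (X B : set (R * R)) (k : nat) : Prop :=
  exists s : seq (R * R), [/\ uniq s, size s = k & X `&` B = [set z | z \in s]].

Definition poisson_pmf (mu : R) (k : nat) : R := expR (- mu) * mu ^+ k / (k`!)%:R.

Definition is_PPP d (Omega : measurableType d) (P : probability Omega R)
    (alpha lambda : R) (X : Omega -> set (R * R)) : Prop :=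
  (forall w, X w `<=` halfplane) /\
  (forall (B : set (R * R)) (k : nat), measurable B -> B `<=` halfplane ->
      bounded_set2 B -> measurable [set w | count_eq (X w) B k]) /\
  (forall (n : nat) (B : 'I_n -> set (R * R)) (k : 'I_n -> nat),
      (forall i, measurable (B i)) -> (forall i, B i `<=` halfplane) ->
      (forall i, bounded_set2 (B i)) ->
      (forall i j, i != j -> B i `&` B j = set0) ->
      P (\bigcap_(i in [set: 'I_n]) [set w | count_eq (X w) (B i) (k i)]) =
      (\prod_(i < n) poisson_pmf (fine (intensity alpha lambda (B i))) (k i))%:E).

End Defs.

(* Main.v *)
Require Import Defs.
From HB Require Import structures.
From mathcomp Require Import all_boot all_order all_algebra.
From mathcomp Require Import all_classical all_reals all_analysis.
Import Order.TTheory GRing.Theory Num.Theory.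
Local Open Scope classical_set_scope.
Local Open Scope ring_scope.
From mathcomp Require Import measurable_realfun.
From mathcomp Require Import lra ring.

Module Aux.
Set Implicit Arguments. Unset Strict Implicit.
Import Order.TTheory GRing.Theory Num.Theory.
Local Open Scope classical_set_scope.
Local Open Scope ring_scope.

Section S.
Variable R : realType.

Definition slab (a : R) (j : nat) : set (R * R) :=
  `[- a, a]%classic `*` `[j%:R, j%:R + 1[%classic.

Lemma slab_meas a j : measurable (slab a j).
Proof. exact: measurableX. Qed.

Lemma integrand_meas (alpha lambda : R) (D : set (R * R)) :
  measurable_fun D (fun p : R * R => (lambda * expR (- (alpha * p.2)))%:E).
Proof.
apply/measurable_EFinP.
apply: measurable_funM => //.
apply: measurableT_comp => //.
apply: measurableT_comp => //.
apply: measurable_funM => //.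
exact: measurable_funS (measurable_snd).
Qed.


Lemma slab_mu (a : R) j : 0 <= a ->
  ((@lebesgue_measure R \x @lebesgue_measure R)%E (slab a j) = (2 * a)%:E)%E.
Proof.
move=> a0; rewrite product_measure1E //.
transitivity ((lebesgue_measure (`[(- a)%R, a]%classic : set R)) *
  (lebesgue_measure (`[j%:R, (j%:R + 1)%R[%classic : set R)))%E; first by [].
rewrite !lebesgue_measure_itv /=.
rewrite !lte_fin ltrDl ltr01 -EFinD.
rewrite -EFinD addrAC subrr add0r.
rewrite mule1.
case: ifP => h; first by rewrite opprK mulr2n mulrDl mul1r.
have -> : a = 0.
  apply/eqP; rewrite eq_le a0 andbT; apply/negP => /negP; rewrite -ltNge => ha.
  by move: h; rewrite (lt_trans _ ha) // oppr_lt0.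
by rewrite mulr0.
Qed.

Lemma intensity_slab_le (alpha lambda a : R) j : 0 <= alpha -> 0 < lambda -> 0 <= a ->
  (intensity alpha lambda (slab a j) <= (lambda * expR (- (alpha * j%:R)) * (2 * a))%:E)%E.
Proof.
move=> al la a0; rewrite /intensity.
apply: (@le_trans _ _ (\int[(@lebesgue_measure R \x @lebesgue_measure R)%E]_(p in slab a j)
   (cst (lambda * expR (- (alpha * j%:R)))%:E p))%E).
  apply: ge0_le_integral => //.
  - exact: slab_meas.
  - by move=> p _; rewrite lee_fin mulr_ge0 // ?ltW ?expR_ge0.
  - exact: integrand_meas.
  - move=> [x z] [_ /= /andP[hz _]] /=; rewrite lee_fin ler_pM2l // ler_expR lerN2.
    by rewrite ler_wpM2l.
rewrite integral_cst; last exact: slab_meas.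
rewrite [X in (_ * X <= _)%E](_ : _ = (2*a)%:E); last exact: slab_mu.
by rewrite -EFinM.
Qed.

Lemma intensity_slab_ge (alpha lambda a : R) j : 0 <= alpha -> 0 < lambda -> 0 <= a ->
  ((lambda * expR (- (alpha * (j%:R + 1))) * (2 * a))%:E <= intensity alpha lambda (slab a j))%E.
Proof.
move=> al la a0; rewrite /intensity.
apply: (@le_trans _ _ (\int[(@lebesgue_measure R \x @lebesgue_measure R)%E]_(p in slab a j)
   (cst (lambda * expR (- (alpha * (j%:R + 1))))%:E p))%E).
  rewrite integral_cst; last exact: slab_meas.
  rewrite [X in (_ <= _ * X)%E](_ : _ = (2*a)%:E); last exact: slab_mu.
  by rewrite -EFinM.
apply: ge0_le_integral => //.
- exact: slab_meas.
- by move=> p _; rewrite lee_fin mulr_ge0 // ?ltW ?expR_ge0.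
- exact: integrand_meas.
- move=> [x z] [_ /= /andP[_ hz]] /=; rewrite lee_fin ler_pM2l // ler_expR lerN2.
  by rewrite ler_wpM2l // ltW.
Qed.

Lemma count0 (Y B : set (R * R)) : count_eq Y B 0 <-> Y `&` B = set0.
Proof.
split.
  by move=> [[|z s] [_ // _ ->]]; apply/seteqP; split => // z.
by move=> h; exists [::]; split => //; rewrite h; apply/seteqP; split => z.
Qed.

Lemma in_slab a j p : slab a j p <-> (- a <= p.1 <= a) /\ (j%:R <= p.2 < j%:R + 1).
Proof. by case: p => x z; rewrite /slab /= !in_itv. Qed.

Lemma slab_half a j : slab a j `<=` halfplane (R:=R).
Proof.
move=> [x z] /in_slab [_ /= /andP[hz _]]; rewrite /halfplane /=.
exact: le_trans _ hz.
Qed.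

Lemma slab_bounded a j : 0 <= a -> bounded_set2 (slab a j).
Proof.
move=> a0; exists (a + j%:R + 1) => -[x z] /in_slab [/= /andP[h1 h2] /= /andP[h3 h4]].
have j0 : 0 <= j%:R :> R by [].
split.
  by rewrite ler_norml; apply/andP; split; lra.
have z0 : 0 <= z by lra.
rewrite ger0_norm //; lra.
Qed.

Lemma slab_disj a b i j : i != j -> slab a i `&` slab b j = set0.
Proof.
move=> ij; apply/seteqP; split => // -[x z] [/in_slab [_ /= /andP[h1 h2]] /in_slab [_ /= /andP[h3 h4]]].
have [ij'|ij'|ij'] := ltngtP i j.
- have : (i.+1%:R <= j%:R :> R) by rewrite ler_nat.
  rewrite -addn1 natrD => h; lra.
- have : (j.+1%:R <= i%:R :> R) by rewrite ler_nat.
  rewrite -addn1 natrD => h; lra.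
- by rewrite ij' eqxx in ij.
Qed.
End S.

Section PPP.
Variables (R : realType) (d : measure_display) (Omega : measurableType d)
  (P : probability Omega R) (alpha lambda : R) (X : Omega -> set (R * R)).
Hypotheses (al : 0 <= alpha) (la : 0 < lambda) (HX : is_PPP P alpha lambda X).

Definition ev (w : nat -> R) j := [set o | count_eq (X o) (slab (w j) j) 0].

Lemma ev_meas w j : 0 <= w j -> measurable (ev w j).
Proof.
move=> w0; case: HX => _ [hm _]; apply: hm.
- exact: slab_meas.
- exact: slab_half.
- exact: slab_bounded.
Qed.

Lemma ppp_slabs (w : nat -> R) (m n : nat) : (forall j, 0 <= w j) ->
  P (\bigcap_(i in [set: 'I_n]) ev w (m + i)) =
  (expR (- \sum_(i < n) fine (intensity alpha lambda (slab (w (m + i)) (m + i)))))%:E.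
Proof.
move=> w0; case: HX => _ [_ hp].
rewrite /ev (hp n (fun i : 'I_n => slab (w (m + i)) (m + i)) (fun _ => 0%N)).
- congr EFin; rewrite -sumrN expR_sum; apply: eq_bigr => i _.
  by rewrite /Defs.poisson_pmf expr0 mulr1 fact0 divr1.
- move=> i; exact: slab_meas.
- move=> i; exact: slab_half.
- move=> i; exact: slab_bounded.
- move=> i j ij; apply: slab_disj.
  by rewrite eqn_add2l.
Qed.
End PPP.

Section Part2.
Variables (R : realType) (y : R).
Hypothesis y0 : 0 <= y.

Definition w2 (j : nat) : R := expR ((y + j%:R + 1) / 2).

Lemma isolated_np (Y : set (R * R)) : Y `<=` halfplane (R:=R) ->
  (forall j, count_eq Y (slab (w2 j) j) 0) -> ~ percolates y Y.
Proof.
move=> Yh hY; apply; apply: (@sub_finite_set _ _ [set (0, y)]); last exact: finite_set1.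
move=> q [s [_ sV pth <-]].
case: s sV pth => [//|z s] sV /= /andP[/asboolP [nz hz] _].
have : z \in [set (0, y)] `|` Y by apply: sV; rewrite mem_head.
rewrite in_setE => -[/= ez|Yz]; first by rewrite ez in nz.
have z2 : 0 <= z.2 by exact: Yh.
set j := Num.Def.trunc z.2.
have /andP[hj1 hj2] := truncn_itv z2.
have := hY j; rewrite count0 => /seteqP[+ _] => /(_ z) hh; exfalso; apply: hh; split => //.
apply/in_slab; split; last by rewrite hj1 /= natr1.
have : `|z.1| <= w2 j.
  apply: (le_trans (ltW _)); first by move: hz; rewrite sub0r normrN; exact.
  rewrite /w2 ler_expR /j /=; rewrite -natr1 in hj2; lra.
by rewrite ler_norml.
Qed.
End Part2.

Lemma fine_le (R : realType) (x : \bar R) (u : R) : (x <= u%:E)%E -> 0 <= u -> fine x <= u.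
Proof. by case: x => //= r; rewrite lee_fin. Qed.

Lemma fine_ge (R : realType) (x : \bar R) (l u : R) : (l%:E <= x)%E -> (x <= u%:E)%E -> l <= fine x.
Proof. by case: x => //= r; rewrite lee_fin. Qed.

Lemma geom_le (R : realType) (q : R) n : 0 <= q -> q <= 1 ->
  (\sum_(i < n) q ^+ i) * (1 - q) <= 1.
Proof.
move=> q0 q1; elim: n => [|n IH]; first by rewrite big_ord0 mul0r.
rewrite big_ord_recl expr0.
have -> : \sum_(i < n) q ^+ (bump 0 i) = q * \sum_(i < n) q ^+ i.
  by rewrite mulr_sumr; apply: eq_bigr => i _; rewrite /bump /= add1n exprS.
set S := \sum_(i < n) q ^+ i in IH *.
nra.
Qed.

Section Part2b.
Variables (R : realType) (d : measure_display) (Omega : measurableType d)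
  (P : probability Omega R) (alpha lambda : R) (X : Omega -> set (R * R)) (y : R).
Hypotheses (al : 1 / 2 < alpha) (la : 0 < lambda) (HX : is_PPP P alpha lambda X) (y0 : 0 <= y).

Let q : R := expR (1 / 2 - alpha).
Let K : R := 2 * lambda * expR ((y + 1) / 2).

Lemma q_lt1 : q < 1.
Proof. by rewrite /q -[X in _ < X]expR0 ltr_expR subr_lt0. Qed.

Lemma sum_bound n :
  \sum_(i < n) fine (intensity alpha lambda (slab (w2 y (0 + i)) (0 + i))) <= K / (1 - q).
Proof.
have a0 : 0 <= alpha by apply: le_trans (ltW al); rewrite divr_ge0.
have q0 : 0 <= q by rewrite /q expR_ge0.
have q1 := q_lt1.
apply: (@le_trans _ _ (\sum_(i < n) K * q ^+ i)).
  apply: ler_sum => i _; rewrite add0n.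
  apply: fine_le; last by rewrite mulr_ge0 ?exprn_ge0 // /K !mulr_ge0 ?expR_ge0 // ltW.
  apply: le_trans (intensity_slab_le _ _ _ _) _ => //; first by rewrite /w2 expR_ge0.
  rewrite lee_fin /K /w2 /q -expRM_natl.
  have E : expR (- (alpha * i%:R)) * expR ((y + i%:R + 1) / 2) =
    expR ((y + 1) / 2) * expR (i%:R * (1 / 2 - alpha)) by rewrite -!expRD; congr expR; ring.
  rewrite le_eqVlt; apply/orP; left; apply/eqP; transitivity (2 * lambda * (expR (- (alpha * i%:R)) * expR ((y + i%:R + 1) / 2))).
    by ring.
  by rewrite E; ring.
rewrite -mulr_sumr ler_pdivlMr ?subr_gt0 // -mulrA.
rewrite ler_piMr //; last exact: geom_le (ltW q1).
by rewrite /K !mulr_ge0 ?expR_ge0 // ltW.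
Qed.

Lemma part2 : ~ {ae P, forall w, percolates y (X w)}.
Proof.
move=> [A [mA PA sub]].
pose F := fun n => \bigcap_(i in [set: 'I_n]) ev X (w2 y) (0 + i).
have w0 : forall j, 0 <= w2 y j by move=> j; exact: expR_ge0.
have mF : forall n, measurable (F n).
  move=> n; apply: fin_bigcap_measurable.
    exact: finite_finset.
  move=> i _. have := @ev_meas _ _ _ _ _ _ _ HX (w2 y) (0 + i) (w0 _). exact.
pose G := \bigcap_n F n.
have mG : measurable G := bigcapT_measurable mF.
have GA : G `<=` A.
  move=> o Go; apply: sub; rewrite /setC /=; apply: isolated_np.
  - by case: HX => hh _; exact: hh.
  - by move=> j; exact: (Go j.+1 I (@ord_max j) I).
have lb : forall n, ((expR (- (K / (1 - q))))%:E <= P (F n))%E.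
  move=> n; rewrite /F (ppp_slabs HX 0 n w0) lee_fin ler_expR lerN2; exact: sum_bound.
have cv : (P \o F) x @[x --> \oo] --> P G.
  apply: nonincreasing_cvg_mu => //.
  - exact: le_lt_trans (probability_le1 P (mF 0%N)) (ltry _).
  - move=> n m nm; apply/subsetPset => o Fo i _.
    exact: (Fo (widen_ord nm i) I).
have : ((expR (- (K / (1 - q))))%:E <= P G)%E.
  rewrite -(cvg_lim _ cv) //; apply: lime_ge; first by apply/cvg_ex; eexists; exact: cv.
  by apply: nearW => n; exact: lb n.
have : (P G <= P A)%E by apply: le_measure => //; rewrite inE.
rewrite PA => h1 h2; have := le_trans h2 h1; rewrite lee_fin.
by rewrite leNgt expR_gt0.
Qed.
End Part2b.

Lemma in_seq_le_sum (R : realType) (s : seq (R * R)) z : z \in s ->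
  `|z.2| <= \sum_(x <- s) `|x.2|.
Proof.
elim: s => //= a s IH; rewrite in_cons big_cons => /orP[/eqP->|h].
  by rewrite lerDl sumr_ge0.
by apply: le_trans (IH h) _; rewrite lerDr.
Qed.

Lemma aux_ineq (R : realType) (y a t : R) : 0 <= y -> 0 <= t * (1 / 2 - a) ->
  - a <= - (a * (t + 1)) + (y + t) / 2.
Proof. move=> y0 h; nra. Qed.

Section Part1.
Variables (R : realType) (d : measure_display) (Omega : measurableType d)
  (P : probability Omega R) (alpha lambda : R) (X : Omega -> set (R * R)) (y : R).
Hypotheses (a0 : 0 < alpha) (ah : alpha <= 1 / 2) (la : 0 < lambda)
  (HX : is_PPP P alpha lambda X) (y0 : 0 <= y).

Definition w1 (j : nat) : R := expR ((y + j%:R) / 2) / 2.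
Let c : R := lambda * expR (- alpha).

Lemma w1_ge0 j : 0 <= w1 j.
Proof. by rewrite /w1 divr_ge0 ?expR_ge0. Qed.

Lemma lowj j : c <= fine (intensity alpha lambda (slab (w1 j) j)).
Proof.
have al : 0 <= alpha by exact: ltW.
apply: le_trans (fine_ge (intensity_slab_ge j al la (w1_ge0 j))
                         (intensity_slab_le j al la (w1_ge0 j))).
rewrite /c /w1.
have -> : 2 * (expR ((y + j%:R) / 2) / 2) = expR ((y + j%:R) / 2) :> R.
  by rewrite mulrC divfK.
rewrite -mulrA ler_pM2l //.
rewrite -expRD ler_expR.
have j0 : 0 <= j%:R :> R by [].
have h : 0 <= j%:R * (1 / 2 - alpha) by rewrite mulr_ge0 // subr_ge0.
exact: (aux_ineq y0 h).
Qed.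

Lemma c_gt0 : 0 < c. Proof. by rewrite /c mulr_gt0 ?expR_gt0. Qed.

Lemma tail_meas m : measurable (\bigcap_k ev X w1 (m + k)).
Proof.
apply: bigcapT_measurable => k.
exact: (@ev_meas _ _ _ _ _ _ _ HX w1 (m + k) (w1_ge0 _)).
Qed.

Lemma tail_le m n : (P (\bigcap_k ev X w1 (m + k)) <= (1 / (1 + n%:R * c))%:E)%E.
Proof.
have c0 := c_gt0.
apply: (@le_trans _ _ (P (\bigcap_(i in [set: 'I_n]) ev X w1 (m + i)))).
  apply: le_measure; rewrite ?inE.
  - exact: tail_meas.
  - apply: fin_bigcap_measurable; first exact: finite_finset.
    move=> i _; exact: (@ev_meas _ _ _ _ _ _ _ HX w1 (m + i) (w1_ge0 _)).
  - by move=> o No i _; exact: No.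
rewrite (ppp_slabs HX m n w1_ge0) lee_fin.
have hs : n%:R * c <= \sum_(i < n) fine (intensity alpha lambda (slab (w1 (m + i)) (m + i))).
  apply: (@le_trans _ _ (\sum_(i < n) c)).
    by rewrite sumr_const card_ord mulr_natl.
  by apply: ler_sum => i _; exact: lowj.
apply: le_trans (_ : expR (- (n%:R * c)) <= _).
  by rewrite ler_expR lerN2.
have p1 : 0 < 1 + n%:R * c by apply: ltr_wpDr => //; rewrite mulr_ge0 // ltW.
by rewrite expRN div1r lef_pV2 ?posrE ?expR_gt0 // expR_ge1Dx.
Qed.

Lemma tail_null m : P (\bigcap_k ev X w1 (m + k)) = 0.
Proof.
have c0 := c_gt0.
apply/eqP; rewrite eq_le measure_ge0 andbT; apply/lee_addgt0Pr => e e0.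
rewrite add0e.
pose n := (Num.Def.trunc (1 / (c * e))).+1.
apply: le_trans (tail_le m n) _; rewrite lee_fin.
have ce : 0 < c * e by rewrite mulr_gt0.
have hn : 1 / (c * e) < n%:R by have /andP[_ ->] := truncn_itv (ltW (divr_gt0 ltr01 ce)).
have hn' : 1 < n%:R * (c * e) by rewrite -ltr_pdivrMr.
rewrite ler_pdivrMr; last by apply: ltr_wpDr => //; rewrite mulr_ge0 // ltW.
move: hn'; set t := n%:R; nra.
Qed.

Lemma nbr_in_comp (Y : set (R * R)) z j : Y z -> slab (w1 j) j z ->
  component ([set (0, y)] `|` Y) (0, y) z.
Proof.
move=> Yz /in_slab [/andP[h1 h2] /andP[h3 h4]].
have [ez|nz] := eqVneq z (0, y).
  by rewrite ez; exists [::]; split => //; rewrite in_setE; left.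
exists [:: z]; split => //.
- by rewrite in_setE; left.
- by move=> x; rewrite inE => /eqP ->; rewrite in_setE; right.
- rewrite /= andbT; apply/asboolP; split; first by apply/eqP; rewrite eq_sym.
  rewrite /= sub0r normrN.
  have hz : `|z.1| <= w1 j by rewrite ler_norml h1 h2.
  apply: le_lt_trans hz _.
  rewrite /w1 (@lt_le_trans _ _ (expR ((y + j%:R) / 2))) //.
    by rewrite ltr_pdivrMr // ltr_pMr ?expR_gt0 // ltr1n.
  by rewrite ler_expR ler_pM2r // lerD2l.
Qed.

Lemma part1 : {ae P, forall w, percolates y (X w)}.
Proof.
apply: (@negligibleS _ _ _ _ (\bigcup_m \bigcap_k ev X w1 (m + k))).
  move=> o /= nperc; apply: contrapT => hno; apply: nperc.
  move=> /finite_seqP [s hs].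
  pose M := \sum_(x <- s) `|x.2|.
  pose m := (Num.Def.trunc M).+1.
  have [k hk] : exists k, ~ ev X w1 (m + k) o.
    apply: contrapT => hk; apply: hno; exists m => // k _.
    by apply: contrapT => h; apply: hk; exists k.
  have [z [Xz Sz]] : exists z, X o z /\ slab (w1 (m + k)) (m + k) z.
    apply: contrapT => hz; apply: hk; apply/count0; apply/seteqP; split => // z [Xz Sz].
    by apply: hz; exists z.
  have : z \in s.
    by have := nbr_in_comp Xz Sz; rewrite hs /=.
  move=> /in_seq_le_sum; rewrite -/M => hM.
  move/in_slab: Sz => [_ /andP[h3 _]].
  have M0 : 0 <= M by rewrite sumr_ge0.
  have /andP[_ hm] := truncn_itv M0.
  have : (m%:R <= (m + k)%:R :> R) by rewrite ler_nat leq_addr.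
  move: hM h3 hm; rewrite -/m => hM h3 hm hmk.
  have : z.2 <= `|z.2| by exact: ler_norm.
  lra.
apply: negligible_bigcup => m.
exists (\bigcap_k ev X w1 (m + k)); split => //.
- exact: tail_meas.
- exact: tail_null.
Qed.
End Part1.

End Aux.
Unset Implicit Arguments.

Theorem lemma2p6 (R : realType) (d : measure_display) (Omega : measurableType d)
    (P : probability Omega R) (alpha lambda : R) (X : Omega -> set (R * R)) :
  0 < alpha -> 0 < lambda -> is_PPP P alpha lambda X ->
  (alpha <= 1 / 2 -> forall y : R, 0 <= y ->
     {ae P, forall w, percolates y (X w)}) /\
  (1 / 2 < alpha -> forall y : R, 0 <= y ->
     ~ {ae P, forall w, percolates y (X w)}).
Proof.
move=> a0 la HX; split.
- move=> ah y y0; exact: (Aux.part1 a0 ah la HX y0).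
- move=> ah y y0; exact: (Aux.part2 ah la HX).
Qed.
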